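(* Let $\Gamma$, $v$, $\Lambda$ be as in the context and suppose $v_n=o(V_n)$ as $n\to\infty$. If $\Lambda$ is an exact $v$-perturbation of $\Gamma$, then $\Lambda$ is a uniqueness sequence for $H_{(\Gamma,v)}$, i.e. there is no nonzero $a\in\ell^2_v$ such that $H_{(\Gamma,v)}a$ vanishes on $\Lambda$.
   Context: $\Gamma=(\gamma_n)_{n\ge1}$ are distinct complex numbers with $\inf_n|\gamma_{n+1}|/|\gamma_n|>1$; $v=(v_n)$ positive with $\sum_nv_n/(1+|\gamma_n|^2)<\infty$. $\ell^2_v=\{(a_n):\sum|a_n|^2v_n<\infty\}$; $H_{(\Gamma,v)}a(z)=\sum_na_nv_n/(z-\gamma_n)$, $z\in\mathbb{C}\setminus\Gamma$. $V_1=1$, $V_n=\sum_{j<n}v_j$; $P_n=\sum_{j>n}v_j/|\gamma_j|^2$. $\Omega_1=\{|z|<(|\gamma_1|+|\gamma_2|)/2\}$, $\Omega_n=\{(|\gamma_{n-1}|+|\gamma_n|)/2\le|z|<(|\gamma_n|+|\gamma_{n+1}|)/2\}$ ($n\ge2$); $D_n(v;M)=\{\lambda\in\Omega_n: Mv_n/|\lambda-\gamma_n|^2\ge\max(V_n/|\lambda|^2,P_n)\}$. $\Lambda$ is a sequence of distinct nonzero complex numbers disjoint from $\Gamma$, indexed $(\lambda_n)_{n\ge n_0}$ by consecutive integers with $|\lambda_n|$ increasing. $\Lambda$ is a $v$-perturbation of $\Gamma$ if $n_0$ can be chosen so that for some sufficiently large $M$, $\lambda_n\in D_n(v;M)$ for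 all but finitely many $n$; with this $n_0$, it is exact if $n_0=1$, of deficiency $n_0-1$ if $n_0>1$, of excess $1-n_0$ if $n_0<1$. *)

(* Defs.v *)
(* INDEXING CONVENTION: the paper's sequences are indexed from 1; here they
   are indexed from 0, i.e. [g k] stands for gamma_{k+1}, [v k] for v_{k+1},
   [a k] for a_{k+1}, [lam k] for lambda_{k+1}. *)
From Stdlib Require Import Reals.
From Coquelicot Require Import Coquelicot.
Open Scope R_scope.

Definition lacunary (g : nat -> C) : Prop :=
  (forall i j, g i = g j -> i = j) /\
  exists q : R, 1 < q /\ forall k, q * Cmod (g k) <= Cmod (g (S k)).

Definition admissible_weight (g : nat -> C) (v : nat -> R) : Prop :=
  (forall k, 0 < v k) /\
  ex_series (fun k => v k / (1 + Cmod (g k) ^ 2)).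

Definition in_l2v (v : nat -> R) (a : nat -> C) : Prop :=
  ex_series (fun k => Cmod (a k) ^ 2 * v k).

(* "H_(Gamma,v) a (z) = w": the series sum_n a_n v_n / (z - gamma_n) sums to w *)
Definition H_is (g : nat -> C) (v : nat -> R) (a : nat -> C) (z w : C) : Prop :=
  is_series (fun k => (a k * RtoC (v k) / (z - g k))%C) w.

(* V_n (paper, 1-based): V_1 = 1, V_n = sum_{j<n} v_j.
   0-based: Vs k = V_{k+1}. *)
Definition Vs (v : nat -> R) (k : nat) : R :=
  match k with
  | O => 1
  | S _ => sum_n v (pred k)
  end.

(* P_n = sum_{j>n} v_j / |gamma_j|^2 ; 0-based: Ps k = P_{k+1}. *)
Definition Ps (g : nat -> C) (v : nat -> R) (k : nat) : R :=
  Series (fun j => v (S k + j)%nat / Cmod (g (S k + j)%nat) ^ 2).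

Definition Omega (g : nat -> C) (k : nat) (z : C) : Prop :=
  match k with
  | O => Cmod z < (Cmod (g O) + Cmod (g 1%nat)) / 2
  | S k' => (Cmod (g k') + Cmod (g k)) / 2 <= Cmod z /\
            Cmod z < (Cmod (g k) + Cmod (g (S k))) / 2
  end.

Definition Dset (g : nat -> C) (v : nat -> R) (M : R) (k : nat) (z : C) : Prop :=
  Omega g k z /\
  Rmax (Vs v k / Cmod z ^ 2) (Ps g v k) <= M * v k / Cmod (z - g k)%C ^ 2.

Definition admissible_Lambda (g lam : nat -> C) : Prop :=
  (forall i j, lam i = lam j -> i = j) /\
  (forall k, lam k <> 0%C) /\
  (forall k j, lam k <> g j) /\
  (forall k, Cmod (lam k) <= Cmod (lam (S k))).

(* Lambda = (lambda_n)_{n>=1} (so n_0 = 1) is an exact v-perturbation of Gamma *)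
Definition exact_v_perturbation (g : nat -> C) (v : nat -> R) (lam : nat -> C) : Prop :=
  exists M : R, exists N : nat, forall k, (N <= k)%nat -> Dset g v M k (lam k).

Definition uniqueness_seq (g : nat -> C) (v : nat -> R) (lam : nat -> C) : Prop :=
  forall a : nat -> C, in_l2v v a -> (forall k, H_is g v a (lam k) 0%C) ->
    forall k, a k = 0%C.

(* Main.v *)
Require Import Defs.
From Stdlib Require Import Reals.
From Coquelicot Require Import Coquelicot.
From Stdlib Require Import Lra Lia Psatz.
Open Scope R_scope.

Fixpoint prodR (f : nat -> R) (n : nat) : R :=
  match n with O => 1 | S n' => prodR f n' * f n' end.

Lemma prodR_nonneg f n : (forall i, (i < n)%nat -> 0 <= f i) -> 0 <= prodR f n.
Proof.
  induction n; simpl; intros H; [lra|].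
  apply Rmult_le_pos; [apply IHn; intros; apply H; lia| apply H; lia].
Qed.

Lemma prodR_ge1 f n : (forall i, (i < n)%nat -> 1 <= f i) -> 1 <= prodR f n.
Proof.
  induction n; simpl; intros H; [lra|].
  assert (1 <= prodR f n) by (apply IHn; intros; apply H; lia).
  assert (1 <= f n) by (apply H; lia). nra.
Qed.

Lemma prodR_le f h n : (forall i, (i < n)%nat -> 0 <= f i <= h i) -> prodR f n <= prodR h n.
Proof.
  induction n; simpl; intros H; [lra|].
  assert (0 <= prodR f n) by (apply prodR_nonneg; intros; apply H; lia).
  assert (prodR f n <= prodR h n) by (apply IHn; intros; apply H; lia).
  destruct (H n) as [Hh1 Hh2]; [lia|]. nra.
Qed.

Lemma prodR_mult f h n : prodR (fun i => f i * h i) n = prodR f n * prodR h n.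
Proof. induction n; simpl; [ring| rewrite IHn; ring]. Qed.

Lemma prodR_const c n : prodR (fun _ => c) n = c ^ n.
Proof. induction n; simpl; [ring| rewrite IHn; ring]. Qed.

Lemma prodR_ext f h n : (forall i, (i < n)%nat -> f i = h i) -> prodR f n = prodR h n.
Proof. induction n; simpl; intros H; [lra|]. rewrite IHn, H; auto. Qed.

Lemma prodR_split_bound f L rho K n : 1 <= L -> 1 <= rho ->
  (forall i, 0 <= f i) -> (forall i, f i <= L * rho) -> (forall i, (K <= i)%nat -> f i <= rho) ->
  prodR f n <= L ^ K * rho ^ n.
Proof.
  intros HL Hr H0 H1 H2.
  assert (forall n, prodR f n <= L ^ (Nat.min n K) * rho ^ n).
  { induction n0; [simpl; lra| cbn [prodR]].
    assert (0 <= prodR f n0) by (apply prodR_nonneg; auto).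
    assert (1 <= L ^ Nat.min n0 K) by (apply pow_R1_Rle; lra).
    assert (1 <= rho ^ n0) by (apply pow_R1_Rle; lra).
    destruct (Nat.lt_ge_cases n0 K).
    - replace (Nat.min (S n0) K) with (S (Nat.min n0 K)) by lia. simpl.
      specialize (H1 n0). specialize (H0 n0).
      apply Rle_trans with (L ^ Nat.min n0 K * rho ^ n0 * (L * rho)).
      + apply Rmult_le_compat; auto.
      + simpl; right; ring.
    - assert (H6: Nat.min (S n0) K = Nat.min n0 K) by lia.
      specialize (H2 n0 H5). specialize (H0 n0).
      apply Rle_trans with (L ^ Nat.min n0 K * rho ^ n0 * rho).
      + apply Rmult_le_compat; auto.
      + rewrite H6. simpl; right; ring. }
  apply Rle_trans with (L ^ Nat.min n K * rho ^ n); auto.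
  apply Rmult_le_compat_r; [apply pow_le; lra|].
  apply Rle_pow; [lra| lia].
Qed.

Lemma prodR_shift f b n j : (n <= j)%nat -> (forall t, 1 <= b t) ->
  (forall i, (i < n)%nat -> 0 <= f i <= b (j - 1 - i)%nat) ->
  prodR f n <= prodR b j.
Proof.
  intros Hnj Hb Hf.
  assert (Hb0 : forall t, 0 <= b t) by (intros t; specialize (Hb t); lra).
  assert (forall n, (n <= j)%nat -> (forall i, (i < n)%nat -> 0 <= f i <= b (j - 1 - i)%nat) ->
     prodR f n * prodR b (j - n) <= prodR b j).
  { induction n0; intros H1 H2.
    - simpl. replace (j - 0)%nat with j by lia. lra.
    - simpl. replace (j - n0)%nat with (S (j - S n0)) in IHn0 by lia. simpl in IHn0.
      assert (0 <= prodR f n0) by (apply prodR_nonneg; intros; apply H2; lia).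
      assert (0 <= prodR b (j - S n0)) by (apply prodR_nonneg; auto).
      destruct (H2 n0) as [Ha Hc]; [lia|].
      replace (j - 1 - n0)%nat with (j - S n0)%nat in Hc by lia.
      apply Rle_trans with (prodR f n0 * (prodR b (j - S n0) * b (j - S n0)%nat)).
      + replace (prodR f n0 * f n0 * prodR b (j - S n0)) with
          (prodR f n0 * (prodR b (j - S n0) * f n0)) by ring.
        apply Rmult_le_compat_l; auto. apply Rmult_le_compat_l; auto.
      + apply IHn0; [lia|]. intros; apply H2; lia. }
  specialize (H n Hnj Hf).
  assert (1 <= prodR b (j - n)) by (apply prodR_ge1; auto).
  assert (0 <= prodR f n) by (apply prodR_nonneg; intros; apply Hf; lia).
  nra.
Qed.

Fixpoint sumC (f : nat -> C) (n : nat) : C :=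
  match n with O => f O | S n' => (sumC f n' + f n)%C end.

Lemma sumC_ext f h n : (forall k, (k <= n)%nat -> f k = h k) -> sumC f n = sumC h n.
Proof. induction n; simpl; intros H; [apply H; lia| rewrite IHn, H; auto]. Qed.

Lemma sumC_plus f h n : sumC (fun k => f k + h k)%C n = (sumC f n + sumC h n)%C.
Proof. induction n; simpl; [ring| rewrite IHn; ring]. Qed.

Lemma sumC_mult_r f c n : sumC (fun k => f k * c)%C n = (sumC f n * c)%C.
Proof. induction n; simpl; [ring| rewrite IHn; ring]. Qed.

Definition InL (lam : nat -> C) (n : nat) (F : C -> C) : Prop :=
  exists c : nat -> C, forall w, (forall k, (k <= n)%nat -> w <> lam k) ->
    F w = sumC (fun k => c k / (w - lam k))%C n.

Lemma Cminus_neq0 (x y : C) : x <> y -> (x - y)%C <> 0%C.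
Proof. intros H E; apply H. replace x with ((x - y) + y)%C by ring. rewrite E; ring. Qed.

Lemma InL_base lam : InL lam 0 (fun w => / (w - lam O))%C.
Proof. exists (fun _ => 1%C). intros w Hw. simpl. field. apply Cminus_neq0, Hw; lia. Qed.


Lemma InL_scal lam n F a : InL lam n F -> InL lam n (fun w => F w * a)%C.
Proof.
  intros [c Hc]. exists (fun k => c k * a)%C. intros w Hw. rewrite Hc; auto.
  rewrite <- sumC_mult_r. apply sumC_ext. intros k Hk. unfold Cdiv. ring.
Qed.

Lemma InL_step lam n F b : InL lam n F ->
  (forall k, (k <= n)%nat -> lam k <> lam (S n)) ->
  InL lam (S n) (fun w => F w * ((w - b) / (w - lam (S n))))%C.
Proof.
  intros [c Hc] Hd.
  set (L := lam (S n)).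
  exists (fun k => if Nat.leb k n then (c k * (lam k - b) / (lam k - L))%C
            else sumC (fun i => c i * (L - b) / (L - lam i))%C n).
  intros w Hw. rewrite Hc by (intros; apply Hw; lia).
  cbn [sumC]. replace (Nat.leb (S n) n) with false by (symmetry; apply Nat.leb_gt; lia).
  rewrite (sumC_ext (fun k => (if Nat.leb k n then (c k * (lam k - b) / (lam k - L))%C
            else sumC (fun i => c i * (L - b) / (L - lam i))%C n) / (w - lam k))%C
            (fun k => (c k * (lam k - b) / (lam k - L)) / (w - lam k))%C).
  2:{ intros k Hk. rewrite (proj2 (Nat.leb_le k n) Hk). reflexivity. }
  rewrite <- sumC_mult_r.
  assert (HwL : (w - L)%C <> 0%C) by (apply Cminus_neq0, Hw; lia).
  assert (E : forall k, (k <= n)%nat ->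
     (c k / (w - lam k) * ((w - b) / (w - L)))%C =
     (c k * (lam k - b) / (lam k - L) / (w - lam k) + (c k * (L - b) / (L - lam k)) / (w - L))%C).
  { intros k Hk. assert ((w - lam k)%C <> 0%C) by (apply Cminus_neq0, Hw; lia).
    assert ((lam k - L)%C <> 0%C) by (apply Cminus_neq0, Hd; auto).
    assert ((L - lam k)%C <> 0%C) by (apply Cminus_neq0; intro E; apply (Hd k Hk); auto).
    field. auto. }
  rewrite (sumC_ext _ _ n E), sumC_plus.
  rewrite (sumC_ext (fun k => c k * (L - b) / (L - lam k) / (w - L))%C
     (fun k => c k * (L - b) / (L - lam k) * / (w - L))%C) by reflexivity.
  rewrite sumC_mult_r. fold L. unfold Cdiv. ring.
Qed.

Definition bidx (m i : nat) : nat := if Nat.ltb i m then i else S i.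

Fixpoint Gp (g lam : nat -> C) (m n : nat) (w : C) : C :=
  match n with
  | O => (/ (w - lam O))%C
  | S n' => (Gp g lam m n' w * ((w - g (bidx m n')) / (w - lam (S n'))))%C
  end.

Lemma Gp_InL g lam m n : (forall i j, lam i = lam j -> i = j) -> InL lam n (Gp g lam m n).
Proof.
  intros Hinj. induction n.
  - apply InL_base.
  - apply InL_step; auto. intros k Hk E. apply Hinj in E. lia.
Qed.

Lemma Gp_zero g lam m n w i : (i < n)%nat -> w = g (bidx m i) -> Gp g lam m n w = 0%C.
Proof.
  induction n; intros Hi Hw; [lia|]. simpl.
  destruct (Nat.eq_dec i n).
  - subst i. replace (w - g (bidx m n))%C with (RtoC 0) by (rewrite Hw; ring). unfold Cdiv. ring.
  - rewrite IHn by (auto; lia). ring.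
Qed.

Lemma Cmult_neq0 (x y : C) : x <> 0%C -> y <> 0%C -> (x * y)%C <> 0%C.
Proof.
  intros Hx Hy E. apply Cmod_gt_0 in Hx. apply Cmod_gt_0 in Hy.
  assert (Cmod (x * y) = 0) by (rewrite E; apply Cmod_0).
  rewrite Cmod_mult in H. nra.
Qed.

Lemma Cinv_neq0 (x : C) : x <> 0%C -> (/ x)%C <> 0%C.
Proof.
  intros Hx E. assert (Cmod (/ x) = 0) by (rewrite E; apply Cmod_0).
  rewrite Cmod_inv in H by auto. apply Cmod_gt_0 in Hx.
  assert (0 < / Cmod x) by (apply Rinv_0_lt_compat; auto). lra.
Qed.

Lemma bidx_neq m i : bidx m i <> m.
Proof. unfold bidx. destruct (Nat.ltb_spec i m); lia. Qed.

Lemma Gp_nonzero g lam m n : (forall i j, g i = g j -> i = j) ->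
  (forall k j, lam k <> g j) -> Gp g lam m n (g m) <> 0%C.
Proof.
  intros Hg Hl. induction n; simpl.
  - apply Cinv_neq0, Cminus_neq0. intro E; apply (Hl O m); auto.
  - apply Cmult_neq0; auto. unfold Cdiv. apply Cmult_neq0.
    + apply Cminus_neq0. intro E. apply Hg in E. apply (bidx_neq m n); auto.
    + apply Cinv_neq0, Cminus_neq0. intro E; apply (Hl (S n) m); auto.
Qed.



Lemma Cmod_Gp g lam m n w : (forall k, w <> lam k) ->
  Cmod (Gp g lam m n w) = / Cmod (w - lam O) *
     prodR (fun i => Cmod (w - g (bidx m i)) / Cmod (w - lam (S i))) n.
Proof.
  intros Hw. induction n; cbn [Gp prodR].
  - rewrite Cmod_inv by (apply Cminus_neq0; auto). ring.
  - rewrite Cmod_mult, IHn, Cmod_div by (apply Cminus_neq0; auto). ring.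
Qed.

Lemma lac_pow (g : nat -> C) q : 1 < q -> (forall k, q * Cmod (g k) <= Cmod (g (S k))) ->
  forall t k, q ^ t * Cmod (g k) <= Cmod (g (k + t)%nat).
Proof.
  intros Hq H t. induction t; intros k.
  - simpl. replace (k + 0)%nat with k by lia. lra.
  - replace (k + S t)%nat with (S (k + t)) by lia. simpl.
    specialize (IHt k). specialize (H (k + t)%nat). pose proof (Cmod_ge_0 (g k)). nra.
Qed.

Lemma lac_mono (g : nat -> C) q : 1 < q -> (forall k, q * Cmod (g k) <= Cmod (g (S k))) ->
  forall k j, (k <= j)%nat -> Cmod (g k) <= Cmod (g j).
Proof.
  intros Hq H k j Hkj. replace j with (k + (j - k))%nat by lia.
  pose proof (lac_pow g q Hq H (j - k) k). pose proof (Cmod_ge_0 (g k)).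
  assert (1 <= q ^ (j - k)) by (apply pow_R1_Rle; lra). nra.
Qed.

Lemma lac_r1 (g : nat -> C) q : 1 < q -> (forall k, q * Cmod (g k) <= Cmod (g (S k))) ->
  (forall i j, g i = g j -> i = j) -> 0 < Cmod (g 1%nat).
Proof.
  intros Hq H Hinj. destruct (Rle_lt_dec (Cmod (g 1%nat)) 0) as [Hle|]; auto.
  exfalso. pose proof (H O). pose proof (Cmod_ge_0 (g O)). pose proof (Cmod_ge_0 (g 1%nat)).
  assert (Cmod (g O) = 0) by nra. assert (Cmod (g 1%nat) = 0) by lra.
  apply Cmod_eq_0 in H3. apply Cmod_eq_0 in H4.
  assert (O = 1%nat) by (apply Hinj; congruence). lia.
Qed.

Lemma lac_lower (g : nat -> C) q : 1 < q -> (forall k, q * Cmod (g k) <= Cmod (g (S k))) ->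
  (forall i j, g i = g j -> i = j) -> forall j, (1 <= j)%nat ->
  Cmod (g 1%nat) * q ^ j <= q * Cmod (g j).
Proof.
  intros Hq H Hinj j Hj. pose proof (lac_pow g q Hq H (j - 1) 1).
  replace (1 + (j - 1))%nat with j in H0 by lia.
  replace j with (S (j - 1)) at 1 by lia. simpl.
  pose proof (Cmod_ge_0 (g 1%nat)). nra.
Qed.

Lemma lam_mono (lam : nat -> C) : (forall k, Cmod (lam k) <= Cmod (lam (S k))) ->
  forall k l, (k <= l)%nat -> Cmod (lam k) <= Cmod (lam l).
Proof.
  intros H k l Hkl. induction Hkl; [lra|]. specialize (H m). lra.
Qed.

Lemma Omega_ub g k z : Omega g k z -> Cmod z < (Cmod (g k) + Cmod (g (S k))) / 2.
Proof. destruct k; simpl; intros H; [exact H| apply H]. Qed.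

Lemma Omega_ub_c (g : nat -> C) q k z : 1 < q -> (forall k, q * Cmod (g k) <= Cmod (g (S k))) ->
  Omega g k z -> Cmod z <= (q + 1) / (2 * q) * Cmod (g (S k)).
Proof.
  intros Hq H HO. apply Omega_ub in HO. specialize (H k).
  assert (Cmod (g k) <= Cmod (g (S k)) / q).
  { apply (Rmult_le_reg_l q); [lra|]. field_simplify; lra. }
  assert ((Cmod (g k) + Cmod (g (S k))) / 2 <= (q + 1) / (2 * q) * Cmod (g (S k))).
  { replace ((q + 1) / (2 * q) * Cmod (g (S k))) with ((Cmod (g (S k)) / q + Cmod (g (S k))) / 2)
      by (field; lra). lra. }
  lra.
Qed.

Lemma sum_n_pos (v : nat -> R) : (forall k, 0 < v k) -> forall k, 0 < sum_n v k.
Proof.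
  intros H k. induction k.
  - rewrite sum_O. auto.
  - rewrite sum_Sn. specialize (H (S k)). change (0 < sum_n v k + v (S k)). lra.
Qed.

Lemma Vs_pos v : (forall k, 0 < v k) -> forall k, 0 < Vs v k.
Proof. intros H k. destruct k; simpl; [lra| apply sum_n_pos; auto]. Qed.

Lemma Vs_S v k : (1 <= k)%nat -> Vs v (S k) = Vs v k + v k.
Proof.
  intros Hk. destruct k; [lia|]. unfold Vs. simpl Init.Nat.pred. rewrite sum_Sn. reflexivity.
Qed.

Lemma v_growth v rho : (forall k, 0 < v k) -> is_lim_seq (fun k => v k / Vs v k) 0 -> 1 < rho ->
  exists K Cv, 0 < Cv /\ forall j, (K <= j)%nat -> v j <= Cv * rho ^ j.
Proof.
  intros Hv Hl Hr. apply is_lim_seq_spec in Hl.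
  assert (He : 0 < rho - 1) by lra.
  destruct (Hl (mkposreal _ He)) as [K0 HK0]. simpl in HK0.
  set (K := Nat.max K0 1).
  assert (Hb : forall k, (K <= k)%nat -> v k <= (rho - 1) * Vs v k).
  { intros k Hk. specialize (HK0 k ltac:(lia)). rewrite Rminus_0_r in HK0.
    pose proof (Vs_pos v Hv k). pose proof (Hv k).
    apply Rabs_def2 in HK0. destruct HK0 as [HK0 _].
    apply Rmult_lt_compat_r with (r := Vs v k) in HK0; auto.
    field_simplify in HK0; lra. }
  assert (Hg : forall t, Vs v (K + t) <= rho ^ t * Vs v K).
  { induction t.
    - replace (K + 0)%nat with K by lia. simpl; lra.
    - replace (K + S t)%nat with (S (K + t)) by lia. rewrite Vs_S by lia.
      specialize (Hb (K + t)%nat ltac:(lia)). simpl. nra. }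
  exists K, (rho * Vs v K). split.
  - pose proof (Vs_pos v Hv K). nra.
  - intros j Hj. specialize (Hb j Hj). specialize (Hg (j - K)%nat).
    replace (K + (j - K))%nat with j in Hg by lia.
    pose proof (Vs_pos v Hv K). pose proof (Vs_pos v Hv j).
    assert (rho ^ (j - K) <= rho ^ j) by (apply Rle_pow; [lra| lia]).
    assert (v j <= rho * Vs v j) by nra.
    assert (0 <= rho ^ (j - K)) by (apply pow_le; lra).
    apply Rle_trans with (rho * Vs v j); auto.
    apply Rle_trans with (rho * (rho ^ (j - K) * Vs v K)); [apply Rmult_le_compat_l; lra|].
    assert (0 <= rho * Vs v K * (rho ^ j - rho ^ (j - K))) by (apply Rmult_le_pos; nra). nra.
Qed.

Lemma delta_small g v (lam : nat -> C) M k eta :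
  (forall k, 0 < v k) -> lam k <> g k -> lam k <> RtoC 0 ->
  Dset g v M k (lam k) -> M * (v k / Vs v k) <= eta ^ 2 -> 0 <= eta <= 1/2 ->
  Cmod (lam k - g k) <= 2 * eta * Cmod (g k).
Proof.
  intros Hv Hlg Hl0 [_ HD] Hm Heta.
  set (d := Cmod (lam k - g k)). set (l := Cmod (lam k)). set (r := Cmod (g k)).
  assert (Hd : 0 < d) by (apply Cmod_gt_0, Cminus_neq0; auto).
  assert (Hlp : 0 < l) by (apply Cmod_gt_0; auto).
  pose proof (Vs_pos v Hv k) as HV. pose proof (Hv k) as Hvk.
  assert (H1 : Vs v k / l ^ 2 <= M * v k / d ^ 2) by (eapply Rle_trans; [apply Rmax_l| exact HD]).
  assert (H2 : d ^ 2 <= eta ^ 2 * l ^ 2).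
  { apply Rmult_le_compat_r with (r := d ^ 2 * l ^ 2 / Vs v k) in H1;
      [| apply Rmult_le_pos; [nra| left; apply Rinv_0_lt_compat; auto]].
    replace (Vs v k / l ^ 2 * (d ^ 2 * l ^ 2 / Vs v k)) with (d ^ 2) in H1 by (field; lra).
    replace (M * v k / d ^ 2 * (d ^ 2 * l ^ 2 / Vs v k)) with (M * (v k / Vs v k) * l ^ 2) in H1
      by (field; lra).
    nra. }
  assert (H3 : d <= eta * l).
  { destruct (Rle_lt_dec d (eta * l)) as [|Hc]; [auto| exfalso].
    assert (eta * l * (eta * l) < d * d) by (apply Rmult_le_0_lt_compat; nra). nra. }
  assert (H4 : l <= r + d).
  { unfold l, r, d. replace (lam k) with (g k + (lam k - g k))%C at 1 by ring.
    apply Cmod_triangle. }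
  nra.
Qed.

Lemma prodR_inv_pair P Q n : (forall i, P i * Q i = 1) -> prodR P n * prodR Q n = 1.
Proof.
  intros H. rewrite <- prodR_mult. rewrite (prodR_ext _ (fun _ => 1)) by (intros; apply H).
  rewrite prodR_const. apply pow1.
Qed.

Lemma ratio_formula g lam m n j : (forall i j, g i = g j -> i = j) -> (forall k j, lam k <> g j) ->
  Cmod (Gp g lam m n (g j)) / Cmod (Gp g lam m n (g m)) =
  Cmod (g m - lam O) / Cmod (g j - lam O) *
  prodR (fun i => Cmod (g j - g (bidx m i)) / Cmod (g j - lam (S i))) n *
  prodR (fun i => Cmod (g m - lam (S i)) / Cmod (g m - g (bidx m i))) n.
Proof.
  intros Hg Hl.
  assert (Hnz : forall k l, 0 < Cmod (g l - lam k)).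
  { intros k l. apply Cmod_gt_0, Cminus_neq0. intro E; apply (Hl k l); auto. }
  assert (Hnz2 : forall i, 0 < Cmod (g m - g (bidx m i))).
  { intros i. apply Cmod_gt_0, Cminus_neq0. intro E. apply Hg in E. apply (bidx_neq m i); auto. }
  rewrite (Cmod_Gp g lam m n (g j)) by (intros k E; apply (Hl k j); auto).
  rewrite (Cmod_Gp g lam m n (g m)) by (intros k E; apply (Hl k m); auto).
  set (PZ := prodR (fun i => Cmod (g m - g (bidx m i)) / Cmod (g m - lam (S i))) n).
  set (PY := prodR (fun i => Cmod (g m - lam (S i)) / Cmod (g m - g (bidx m i))) n).
  assert (HZY : PZ * PY = 1).
  { apply prodR_inv_pair. intros i. specialize (Hnz (S i) m). specialize (Hnz2 i). field. lra. }
  assert (PZ <> 0) by (intro E; rewrite E in HZY; lra).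
  pose proof (Hnz O m). specialize (Hnz O j).
  replace PY with (/ PZ) by (apply (Rmult_eq_reg_l PZ); [|auto]; rewrite HZY; field; auto).
  field. repeat split; lra.
Qed.

Lemma Cmod_sub_ge (x y : C) : Cmod x - Cmod y <= Cmod (x - y).
Proof.
  pose proof (Cmod_triangle (x - y) y). replace (x - y + y)%C with x in H by ring. lra.
Qed.

Lemma Cmod_sub_le (x y : C) : Cmod (x - y) <= Cmod x + Cmod y.
Proof.
  pose proof (Cmod_triangle x (- y)). unfold Cminus. 
  replace (Cmod (- y)) with (Cmod y) in H; auto.
  replace (- y)%C with ((- (1)) * y)%C by ring. rewrite Cmod_mult, Cmod_m1. ring.
Qed.

Definition cq q := (q + 1) / (2 * q).
Definition Lq q := 2 / (1 - cq q).
Definition bq q t := (1 + / q ^ (S t)) / (1 - cq q / q ^ t).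

Lemma cq_bounds q : 1 < q -> 0 < cq q < 1.
Proof. intros Hq. unfold cq. split; [apply Rdiv_lt_0_compat; lra|].
  apply Rmult_lt_reg_r with (2 * q); [lra|]. field_simplify; lra. Qed.

Lemma Lq_ge1 q : 1 < q -> 1 <= Lq q.
Proof. intros Hq. pose proof (cq_bounds q Hq). unfold Lq.
  apply Rmult_le_reg_r with (1 - cq q); [lra|]. field_simplify; lra. Qed.

Lemma bq_bounds q t : 1 < q -> 1 <= bq q t <= Lq q.
Proof.
  intros Hq. pose proof (cq_bounds q Hq) as Hc. unfold bq, Lq.
  assert (H1 : 1 <= q ^ t) by (apply pow_R1_Rle; lra).
  assert (H2 : 1 <= q ^ S t) by (apply pow_R1_Rle; lra).
  assert (H3 : 0 < / q ^ S t <= 1).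
  { split; [apply Rinv_0_lt_compat; lra|]. rewrite <- Rinv_1. apply Rinv_le_contravar; lra. }
  assert (H4 : 0 < cq q / q ^ t <= cq q).
  { split; [apply Rdiv_lt_0_compat; lra|]. unfold Rdiv.
    assert (/ q ^ t <= 1) by (rewrite <- Rinv_1; apply Rinv_le_contravar; lra). nra. }
  set (D := 1 - cq q / q ^ t). assert (HD : 1 - cq q <= D <= 1) by (unfold D; lra).
  assert (HD1 : 1 <= / D) by (rewrite <- Rinv_1; apply Rinv_le_contravar; lra).
  assert (HD2 : / D <= / (1 - cq q)) by (apply Rinv_le_contravar; lra).
  unfold Rdiv. split; [nra|].
  apply Rle_trans with (2 * / D); [apply Rmult_le_compat_r; lra| apply Rmult_le_compat_l; lra].
Qed.

Lemma bq_eventually q rho : 1 < q -> 1 < rho -> exists T, forall t, (T <= t)%nat -> bq q t <= rho.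
Proof.
  intros Hq Hr. pose proof (is_lim_seq_geom_p q Hq) as H. apply is_lim_seq_spec in H.
  destruct (H ((rho + 1) / (rho - 1))) as [T HT]. exists T. intros t Ht.
  specialize (HT t Ht). pose proof (cq_bounds q Hq) as Hc.
  set (x := / q ^ t).
  assert (Hqt : 0 < q ^ t) by (apply pow_lt; lra).
  assert (Hx : 0 < x) by (apply Rinv_0_lt_compat; auto).
  assert (Hx1 : x < (rho - 1) / (rho + 1)).
  { assert (Hp : 0 < (rho + 1) / (rho - 1)) by (apply Rdiv_lt_0_compat; lra).
    unfold x. replace ((rho - 1) / (rho + 1)) with (/ ((rho + 1) / (rho - 1))) by (field; lra).
    apply Rinv_lt_contravar; [apply Rmult_lt_0_compat; auto| exact HT]. }
  assert (Hs : / q ^ S t <= x).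
  { unfold x. apply Rinv_le_contravar; auto. simpl. nra. }
  assert (Hcx : cq q / q ^ t <= x) by (replace (cq q / q ^ t) with (cq q * x) by reflexivity; nra).
  assert (Hxr : x < 1).
  { assert ((rho - 1) / (rho + 1) < 1) by (apply Rmult_lt_reg_r with (rho + 1); [lra|]; field_simplify; lra). lra. }
  unfold bq. apply Rle_trans with ((1 + x) / (1 - x)).
  - assert (0 < / q ^ S t) by (apply Rinv_0_lt_compat, pow_lt; lra).
    assert (0 < cq q / q ^ t) by (apply Rdiv_lt_0_compat; lra).
    unfold Rdiv. apply Rmult_le_compat.
    + lra.
    + left; apply Rinv_0_lt_compat; lra.
    + lra.
    + apply Rinv_le_contravar; lra.
  - apply Rmult_le_reg_r with (1 - x); [lra|]. field_simplify; [|lra].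
    assert (x * (rho + 1) <= rho - 1).
    { apply Rmult_lt_compat_r with (r := rho + 1) in Hx1; [|lra]. field_simplify in Hx1; lra. }
    lra.
Qed.

Lemma div_le A A' B B' : 0 <= A <= A' -> 0 < B' <= B -> A / B <= A' / B'.
Proof.
  intros HA HB. unfold Rdiv. apply Rmult_le_compat; try lra.
  - left; apply Rinv_0_lt_compat; lra.
  - apply Rinv_le_contravar; lra.
Qed.

Lemma scale_div r a b : r <> 0 -> b <> 0 -> r * a / (r * b) = a / b.
Proof. intros. field. auto. Qed.

Lemma bidx_le m i : (bidx m i <= S i)%nat.
Proof. unfold bidx. destruct (Nat.ltb i m); lia. Qed.

Lemma X_bound (g lam : nat -> C) q N0 m n j i :
  1 < q -> (forall k, q * Cmod (g k) <= Cmod (g (S k))) ->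
  (forall k, Cmod (lam k) <= Cmod (lam (S k))) ->
  (forall k, (N0 <= k)%nat -> Omega g k (lam k)) ->
  0 < Cmod (g j) -> (i < n)%nat -> (S n <= j)%nat -> (N0 < j)%nat ->
  Cmod (g j - g (bidx m i)) / Cmod (g j - lam (S i)) <=
    (if Nat.ltb (S i) N0 then Lq q else 1) * bq q (j - 2 - i).
Proof.
  intros Hq Hlac Hlm HO Hrj Hi Hj HjN.
  pose proof (cq_bounds q Hq) as Hc. set (c := cq q) in *.
  set (rj := Cmod (g j)) in *. set (t := (j - 2 - i)%nat).
  assert (HA : Cmod (g j - g (bidx m i)) <= rj + Cmod (g (S i))).
  { eapply Rle_trans; [apply Cmod_sub_le|]. apply Rplus_le_compat_l.
    apply (lac_mono g q Hq Hlac). apply bidx_le. }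
  assert (HA0 : 0 <= Cmod (g j - g (bidx m i))) by apply Cmod_ge_0.
  assert (Hri : q ^ S t * Cmod (g (S i)) <= rj).
  { pose proof (lac_pow g q Hq Hlac (S t) (S i)). unfold rj.
    replace (S i + S t)%nat with j in H by (unfold t; lia). exact H. }
  assert (Hqt : 0 < q ^ t) by (apply pow_lt; lra).
  assert (HqSt : q ^ S t = q * q ^ t) by reflexivity.
  assert (Hr0 : 0 <= Cmod (g (S i))) by apply Cmod_ge_0.
  assert (HB : rj - Cmod (lam (S i)) <= Cmod (g j - lam (S i))) by apply Cmod_sub_ge.
  pose proof (bq_bounds q t Hq) as Hb.
  destruct (Nat.ltb_spec (S i) N0).
  -
    assert (Hl : Cmod (lam (S i)) <= c * rj).
    { apply Rle_trans with (Cmod (lam (j - 1)%nat)).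
      - apply lam_mono; auto; lia.
      - pose proof (Omega_ub_c g q (j - 1) (lam (j - 1)%nat) Hq Hlac (HO (j - 1)%nat ltac:(lia))).
        replace (S (j - 1)) with j in H0 by lia. exact H0. }
    assert (Hr1 : Cmod (g (S i)) <= rj).
    { apply (lac_mono g q Hq Hlac). lia. }
    apply Rle_trans with (Lq q); [| pose proof (Lq_ge1 q Hq); nra].
    unfold Lq. fold c.
    replace (2 / (1 - c)) with ((2 * rj) / ((1 - c) * rj)) by (field; lra).
    apply div_le; [lra|]. split; [nra| lra].
  - assert (Hl : Cmod (lam (S i)) <= c * rj / q ^ t).
    { pose proof (Omega_ub_c g q (S i) (lam (S i)) Hq Hlac (HO (S i) ltac:(lia))).
      pose proof (lac_pow g q Hq Hlac t (S (S i))).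
      replace (S (S i) + t)%nat with j in H1 by (unfold t; lia).
      apply Rle_trans with (c * Cmod (g (S (S i)))); [exact H0|].
      unfold Rdiv. rewrite Rmult_assoc. apply Rmult_le_compat_l; [lra|].
      change (Cmod (g (S (S i))) <= rj / q ^ t). apply Rmult_le_reg_l with (q ^ t); auto.
      replace (q ^ t * (rj / q ^ t)) with rj by (field; lra). unfold rj; lra. }
    assert (Hct : c / q ^ t < 1).
    { assert (1 <= q ^ t) by (apply pow_R1_Rle; lra).
      apply Rmult_lt_reg_r with (q ^ t); auto. unfold Rdiv. rewrite Rmult_assoc, Rinv_l by lra. lra. }
    assert (Hct2 : c < q ^ t).
    { assert (1 <= q ^ t) by (apply pow_R1_Rle; lra). lra. }
    rewrite Rmult_1_l. unfold bq. fold c. fold t.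
    rewrite <- (scale_div rj (1 + / q ^ S t) (1 - c / q ^ t)) by lra.

    apply div_le.
    + split; auto. assert (Cmod (g (S i)) <= rj / q ^ S t).
      { apply Rmult_le_reg_l with (q ^ S t); [apply pow_lt; lra|]. replace (q ^ S t * (rj / q ^ S t)) with rj by (field; apply pow_nonzero; lra). lra. }
      unfold Rdiv in H0. lra.
    + split; [apply Rmult_lt_0_compat; lra|].
      replace (rj * (1 - c / q ^ t)) with (rj - c * rj / q ^ t) by (field; lra). lra.
Qed.

Lemma Cmod_sym (x y : C) : Cmod (x - y) = Cmod (y - x).
Proof.
  replace (x - y)%C with ((- (1)) * (y - x))%C by ring. rewrite Cmod_mult, Cmod_m1. ring.
Qed.

Lemma Y_eventually (g : nat -> C) v (lam : nat -> C) q M N0 m rho :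
  1 < q -> (forall k, q * Cmod (g k) <= Cmod (g (S k))) -> (forall i j, g i = g j -> i = j) ->
  (forall k, 0 < v k) -> is_lim_seq (fun k => v k / Vs v k) 0 ->
  (forall k, (N0 <= k)%nat -> Dset g v M k (lam k)) ->
  (forall k j, lam k <> g j) -> (forall k, lam k <> RtoC 0) -> 1 < rho ->
  exists I1, forall i, (I1 <= i)%nat ->
    Cmod (g m - lam (S i)) / Cmod (g m - g (bidx m i)) <= rho.
Proof.
  intros Hq Hlac Hg Hv Hlim HD Hlg Hl0 Hr.
  set (eta := Rmin (1/2) ((rho - 1) * (1 - 1/q) / 2)).
  assert (Hq1 : 0 < 1 - 1/q).
  { assert (1/q < 1) by (apply Rmult_lt_reg_r with q; [lra|]; field_simplify; lra). lra. }
  assert (Heta : 0 < eta).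
  { unfold eta. apply Rmin_pos; [lra|]. apply Rdiv_lt_0_compat; [apply Rmult_lt_0_compat|]; lra. }
  assert (Heta1 : eta <= 1/2) by apply Rmin_l.
  assert (Heta2 : eta <= (rho - 1) * (1 - 1/q) / 2) by apply Rmin_r.
  apply is_lim_seq_spec in Hlim.
  assert (Hp : 0 < eta ^ 2 / (Rabs M + 1)).
  { apply Rdiv_lt_0_compat; [apply pow_lt; lra| pose proof (Rabs_pos M); lra]. }
  destruct (Hlim (mkposreal _ Hp)) as [K HK]. simpl in HK.
  exists (Nat.max (Nat.max m N0) K). intros i Hi.
  set (k := S i).
  assert (Hb : bidx m i = k).
  { unfold bidx, k. destruct (Nat.ltb_spec i m); lia. }
  rewrite Hb.
  assert (Hx : M * (v k / Vs v k) <= eta ^ 2).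
  { specialize (HK k ltac:(unfold k; lia)). rewrite Rminus_0_r in HK.
    pose proof (Vs_pos v Hv k). pose proof (Hv k).
    assert (0 < v k / Vs v k) by (apply Rdiv_lt_0_compat; auto).
    rewrite Rabs_pos_eq in HK by lra.
    apply Rmult_lt_compat_r with (r := Rabs M + 1) in HK; [|pose proof (Rabs_pos M); lra].
    assert (HK2 : v k / Vs v k * (Rabs M + 1) < eta ^ 2)
      by (eapply Rlt_le_trans; [exact HK| right; field; pose proof (Rabs_pos M); lra]).
    pose proof (Rle_abs M). assert (M * (v k / Vs v k) <= (Rabs M + 1) * (v k / Vs v k)) by (apply Rmult_le_compat_r; lra). lra. }
  assert (Hd : Cmod (lam k - g k) <= 2 * eta * Cmod (g k)).
  { apply (delta_small g v lam M k eta Hv); auto. apply HD. unfold k; lia. lra. }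
  assert (Hrk : 0 < Cmod (g k)).
  { pose proof (lac_r1 g q Hq Hlac Hg). pose proof (lac_mono g q Hq Hlac 1 k ltac:(unfold k; lia)). lra. }
  assert (Hrm : q * Cmod (g m) <= Cmod (g k)).
  { pose proof (lac_pow g q Hq Hlac (k - m) m). replace (m + (k - m))%nat with k in H by (unfold k; lia).
    assert (q <= q ^ (k - m)).
    { replace (k - m)%nat with (S (k - m - 1)) by (unfold k; lia). rewrite <- tech_pow_Rmult.
      assert (1 <= q ^ (k - m - 1)) by (apply pow_R1_Rle; lra). nra. }
    pose proof (Cmod_ge_0 (g m)). nra. }
  set (D := Cmod (g m - g k)).
  assert (HD1 : Cmod (g k) * (1 - 1/q) <= D).
  { unfold D. rewrite Cmod_sym. pose proof (Cmod_sub_ge (g k) (g m)).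
    assert (Cmod (g m) <= Cmod (g k) / q) by (apply Rmult_le_reg_l with q; [lra|]; field_simplify; lra).
    replace (Cmod (g k) * (1 - 1/q)) with (Cmod (g k) - Cmod (g k) / q) by (field; lra). lra. }
  assert (HDp : 0 < D) by nra.
  assert (HN : Cmod (g m - lam k) <= D + 2 * eta * Cmod (g k)).
  { replace (g m - lam k)%C with ((g m - g k) + (g k - lam k))%C by ring.
    eapply Rle_trans; [apply Cmod_triangle|]. rewrite (Cmod_sym (g k)). unfold D. lra. }
  apply Rle_trans with ((D + 2 * eta * Cmod (g k)) / D).
  { unfold Rdiv. apply Rmult_le_compat_r; [left; apply Rinv_0_lt_compat; auto| auto]. }
  replace ((D + 2 * eta * Cmod (g k)) / D) with (1 + 2 * eta * Cmod (g k) / D) by (field; lra).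
  assert (2 * eta * Cmod (g k) / D <= rho - 1).
  { apply Rmult_le_reg_r with D; auto. unfold Rdiv. rewrite Rmult_assoc, Rinv_l, Rmult_1_r by lra.
    assert (2 * eta <= (rho - 1) * (1 - 1/q)) by lra.
    assert (0 <= rho - 1) by lra. nra. }
  lra.
Qed.

Lemma finite_max (f : nat -> R) I : exists B, 1 <= B /\ forall i, (i < I)%nat -> f i <= B.
Proof.
  induction I.
  - exists 1. split; [lra| intros; lia].
  - destruct IHI as [B [HB H]]. exists (Rmax B (f I)). split.
    + eapply Rle_trans; [exact HB| apply Rmax_l].
    + intros i Hi. destruct (Nat.eq_dec i I).
      * subst. apply Rmax_r.
      * eapply Rle_trans; [apply H; lia| apply Rmax_l].
Qed.

Lemma div_nonneg a b : 0 <= a -> 0 <= b -> 0 <= a / b.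
Proof.
  intros Ha Hb. destruct (Req_dec b 0) as [E|E].
  - rewrite E. unfold Rdiv. rewrite Rinv_0. lra.
  - apply Rdiv_le_0_compat; lra.
Qed.

Lemma sqrt_gt1 x : 1 < x -> 1 < sqrt x.
Proof.
  intros H. pose proof (sqrt_sqrt x ltac:(lra)). pose proof (sqrt_pos x).
  destruct (Rle_lt_dec (sqrt x) 1); auto. nra.
Qed.

Lemma main_estimate (g : nat -> C) v (lam : nat -> C) q M N0 m :
  1 < q -> (forall k, q * Cmod (g k) <= Cmod (g (S k))) -> (forall i j, g i = g j -> i = j) ->
  (forall k, 0 < v k) -> is_lim_seq (fun k => v k / Vs v k) 0 ->
  (forall k, (N0 <= k)%nat -> Dset g v M k (lam k)) ->
  (forall k j, lam k <> g j) -> (forall k, lam k <> RtoC 0) ->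
  (forall k, Cmod (lam k) <= Cmod (lam (S k))) ->
  exists C theta N1, 0 <= C /\ 0 <= theta < 1 /\
    forall n j, (N1 <= n)%nat -> (S n <= j)%nat ->
      v j * (Cmod (Gp g lam m n (g j)) / Cmod (Gp g lam m n (g m))) ^ 2 <= C * theta ^ j.
Proof.
  intros Hq Hlac Hg Hv Hlim HD Hlg Hl0 Hlm.
  set (rho := sqrt (sqrt q)).
  assert (Hr : 1 < rho) by (apply sqrt_gt1, sqrt_gt1; auto).
  assert (Hr4 : rho ^ 4 = q).
  { unfold rho. replace 4%nat with (2 * 2)%nat by reflexivity. rewrite pow_mult.
    rewrite pow2_sqrt by (apply sqrt_pos). apply pow2_sqrt. lra. }
  assert (HO : forall k, (N0 <= k)%nat -> Omega g k (lam k)) by (intros k Hk; apply HD; auto).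
  destruct (bq_eventually q rho Hq Hr) as [T HT].
  destruct (Y_eventually g v lam q M N0 m rho Hq Hlac Hg Hv Hlim HD Hlg Hl0 Hr) as [I1 HI1].
  set (Y := fun i => Cmod (g m - lam (S i)) / Cmod (g m - g (bidx m i))).
  destruct (finite_max Y I1) as [Ym [HYm HYmb]].
  destruct (v_growth v rho Hv Hlim Hr) as [Kv [Cv [HCv HKv]]].
  pose proof (cq_bounds q Hq) as Hc. set (c := cq q) in *.
  pose proof (Lq_ge1 q Hq) as HL. set (L := Lq q) in *.
  pose proof (lac_r1 g q Hq Hlac Hg) as Hr1. set (r1 := Cmod (g 1%nat)) in *.
  set (A0 := Cmod (g m - lam O)).
  set (C2 := A0 / (1 - c) * L ^ N0 * L ^ T * Ym ^ I1 * q / r1).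
  set (theta := rho ^ 5 / q ^ 2).
  assert (HA0 : 0 <= A0) by apply Cmod_ge_0.
  assert (HC2 : 0 <= C2).
  { unfold C2. assert (0 < L ^ N0) by (apply pow_lt; lra). assert (0 < L ^ T) by (apply pow_lt; lra).
    assert (0 < Ym ^ I1) by (apply pow_lt; lra).
    repeat apply Rmult_le_pos; try lra; apply Rlt_le; try apply Rinv_0_lt_compat; lra. }
  exists (Cv * C2 ^ 2), theta, (Nat.max N0 Kv). split; [|split].
  { apply Rmult_le_pos; [lra| apply pow2_ge_0]. }
  { unfold theta. split; [apply Rdiv_le_0_compat; [apply pow_le; lra| apply pow_lt; lra]|].
    rewrite <- Hr4. apply Rmult_lt_reg_r with ((rho ^ 4) ^ 2); [apply pow_lt, pow_lt; lra|].
    unfold Rdiv. rewrite Rmult_assoc, Rinv_l by (apply pow_nonzero, pow_nonzero; lra).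
    rewrite <- pow_mult. simpl. 
    replace (rho * (rho * (rho * (rho * (rho * 1)))) * 1) with (rho ^ 5 * 1) by ring.
    replace (1 * (rho * (rho * (rho * (rho * (rho * (rho * (rho * (rho * 1)))))))))
      with (rho ^ 5 * (rho * rho * rho)) by ring.
    apply Rmult_lt_compat_l; [apply pow_lt; lra| nra]. }
  intros n j Hn Hj.
  assert (Hj1 : (1 <= j)%nat) by lia.
  assert (Hrj : 0 < Cmod (g j)).
  { pose proof (lac_mono g q Hq Hlac 1 j Hj1). unfold r1 in Hr1. lra. }
  assert (HR : Cmod (Gp g lam m n (g j)) / Cmod (Gp g lam m n (g m)) <= C2 * (rho ^ 2 / q) ^ j).
  { rewrite ratio_formula by auto.
    set (X := fun i => Cmod (g j - g (bidx m i)) / Cmod (g j - lam (S i))).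
    fold Y. change (prodR (fun i => Cmod (g j - g (bidx m i)) / Cmod (g j - lam (S i))) n) with (prodR X n).
    set (E := fun i : nat => if Nat.ltb (S i) N0 then L else 1).
    assert (HE : forall i, 1 <= E i <= L).
    { intros i. unfold E. destruct (Nat.ltb (S i) N0); lra. }
    assert (HX0 : forall i, 0 <= X i).
    { intros i. unfold X. apply div_nonneg; apply Cmod_ge_0. }
    set (f := fun i => X i / E i).
    assert (HXf : prodR X n = prodR E n * prodR f n).
    { rewrite <- prodR_mult. apply prodR_ext. intros i _. unfold f. field.
      specialize (HE i). lra. }
    assert (HPE : prodR E n <= L ^ N0).
    { pose proof (prodR_split_bound E L 1 N0 n HL ltac:(lra)) as H.
      rewrite pow1 in H. rewrite <- (Rmult_1_r (L ^ N0)). apply H.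
      - intros i; specialize (HE i); lra.
      - intros i; specialize (HE i); lra.
      - intros i Hi. unfold E. replace (Nat.ltb (S i) N0) with false; [lra|].
        symmetry. apply Nat.ltb_ge. lia. }
    assert (HPf : prodR f n <= prodR (bq q) (j - 1)).
    { apply prodR_shift; [lia| intros t; apply bq_bounds; auto|].
      intros i Hi. specialize (HE i). split.
      - unfold f. apply div_nonneg; [apply HX0| lra].
      - unfold f. replace (j - 1 - 1 - i)%nat with (j - 2 - i)%nat by lia.
        pose proof (X_bound g lam q N0 m n j i Hq Hlac Hlm HO Hrj Hi Hj ltac:(lia)) as HXb.
        fold X c L in HXb. fold E in HXb. change (X i <= E i * bq q (j - 2 - i)) in HXb.
        apply Rmult_le_reg_l with (E i); [lra|]. unfold Rdiv. rewrite <- Rmult_assoc.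
        rewrite (Rmult_comm (E i) (X i)), Rmult_assoc, Rinv_r, Rmult_1_r by lra. exact HXb. }
    assert (HPb : prodR (bq q) (j - 1) <= L ^ T * rho ^ (j - 1)).
    { apply prodR_split_bound; auto; try lra.
      - intros t. pose proof (bq_bounds q t Hq). lra.
      - intros t. pose proof (bq_bounds q t Hq). fold c L in H. nra. }
    assert (Hf0 : 0 <= prodR f n).
    { apply prodR_nonneg. intros i _. unfold f. apply div_nonneg; [apply HX0| specialize (HE i); lra]. }
    assert (HE0 : 0 <= prodR E n) by (apply prodR_nonneg; intros i _; specialize (HE i); lra).
    assert (HPX : prodR X n <= L ^ N0 * (L ^ T * rho ^ (j - 1))).
    { rewrite HXf. apply Rmult_le_compat; auto. lra. }
    assert (HY0 : forall i, 0 <= Y i) by (intros i; unfold Y; apply div_nonneg; apply Cmod_ge_0).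
    assert (HPY : prodR Y n <= Ym ^ I1 * rho ^ n).
    { apply prodR_split_bound; auto; try lra.
      - intros i. destruct (Nat.lt_ge_cases i I1).
        + specialize (HYmb i H). assert (Ym <= Ym * rho) by nra. lra.
        + specialize (HI1 i H). change (Y i <= rho) in HI1. assert (rho <= Ym * rho) by nra. lra.
      }
    assert (HDen : (1 - c) * Cmod (g j) <= Cmod (g j - lam O)).
    { pose proof (Cmod_sub_ge (g j) (lam O)).
      assert (Cmod (lam O) <= c * Cmod (g j)).
      { apply Rle_trans with (Cmod (lam (j - 1)%nat)); [apply lam_mono; auto; lia|].
        pose proof (Omega_ub_c g q (j - 1) (lam (j - 1)%nat) Hq Hlac (HO (j - 1)%nat ltac:(lia))).
        replace (S (j - 1)) with j in H0 by lia. exact H0. }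
      lra. }
    assert (HDp : 0 < (1 - c) * Cmod (g j)) by (apply Rmult_lt_0_compat; lra).
    assert (HX1 : 0 <= prodR X n) by (apply prodR_nonneg; auto).
    assert (HY1 : 0 <= prodR Y n) by (apply prodR_nonneg; auto).
    assert (HLT : 0 < L ^ N0 * (L ^ T * rho ^ (j - 1))).
    { repeat apply Rmult_lt_0_compat; apply pow_lt; lra. }
    apply Rle_trans with (A0 / ((1 - c) * Cmod (g j)) * (L ^ N0 * (L ^ T * rho ^ (j - 1))) * (Ym ^ I1 * rho ^ n)).
    { apply Rmult_le_compat; auto.
      - apply Rmult_le_pos; auto. apply div_nonneg; auto. apply Cmod_ge_0.
      - apply Rmult_le_compat; auto. apply div_nonneg; auto. apply Cmod_ge_0.
        apply div_le; [split; [apply Cmod_ge_0| right; reflexivity]| lra]. }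
    assert (Hlow : r1 * q ^ j <= q * Cmod (g j)) by (apply lac_lower; auto).
    assert (Hpow : rho ^ (j - 1) * rho ^ n <= (rho ^ 2) ^ j).
    { rewrite <- pow_add, <- pow_mult. apply Rle_pow; [lra| lia]. }
    assert (Hqj : 0 < q ^ j) by (apply pow_lt; lra).
    assert (Hinv : / Cmod (g j) <= q / r1 * / q ^ j).
    { apply Rmult_le_reg_l with (Cmod (g j)); auto. rewrite Rinv_r by lra.
      apply Rmult_le_reg_l with (r1 * q ^ j); [apply Rmult_lt_0_compat; auto|].
      replace (r1 * q ^ j * (Cmod (g j) * (q / r1 * / q ^ j))) with (q * Cmod (g j)) by (field; lra).
      lra. }
    replace ((rho ^ 2 / q) ^ j) with ((rho ^ 2) ^ j * / q ^ j)
      by (unfold Rdiv; rewrite Rpow_mult_distr, pow_inv; reflexivity).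
    unfold C2.
    set (K := A0 / (1 - c) * L ^ N0 * L ^ T * Ym ^ I1).
    assert (HK : 0 <= K).
    { unfold K. assert (0 < Ym ^ I1) by (apply pow_lt; lra).
      repeat apply Rmult_le_pos; try (apply pow_le; lra); try lra.
      left; apply Rinv_0_lt_compat; lra. }
    replace (A0 / ((1 - c) * Cmod (g j)) * (L ^ N0 * (L ^ T * rho ^ (j - 1))) * (Ym ^ I1 * rho ^ n))
      with (K * (/ Cmod (g j)) * (rho ^ (j - 1) * rho ^ n)) by (unfold K; field; lra).
    replace (K * q / r1 * ((rho ^ 2) ^ j * / q ^ j)) with (K * (q / r1 * / q ^ j) * (rho ^ 2) ^ j)
      by (field; lra).
    apply Rmult_le_compat; auto.
    - apply Rmult_le_pos; auto. left; apply Rinv_0_lt_compat; lra.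
    - apply Rmult_le_pos; apply pow_le; lra.
    - apply Rmult_le_compat_l; auto. }
  set (R := Cmod (Gp g lam m n (g j)) / Cmod (Gp g lam m n (g m))) in *.
  assert (HR0 : 0 <= R) by (apply div_nonneg; apply Cmod_ge_0).
  assert (Hvj : v j <= Cv * rho ^ j) by (apply HKv; lia).
  set (x := rho ^ 2 / q).
  assert (Hx0 : 0 <= x ^ j) by (apply pow_le; unfold x; apply div_nonneg; [apply pow_le|]; lra).
  assert (HR2 : R ^ 2 <= C2 ^ 2 * (x ^ j) ^ 2).
  { rewrite <- Rpow_mult_distr. apply pow_incr. split; auto. }
  assert (Hid : rho ^ j * (x ^ j) ^ 2 = theta ^ j).
  { rewrite <- pow_mult, Nat.mul_comm, pow_mult, <- Rpow_mult_distr. f_equal.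
    unfold theta, x. field. lra. }
  apply Rle_trans with (Cv * rho ^ j * (C2 ^ 2 * (x ^ j) ^ 2)).
  { pose proof (Hv j). apply Rmult_le_compat; [lra| apply pow2_ge_0| exact Hvj| exact HR2]. }
  rewrite <- Hid. right. ring.
Qed.

Lemma series_comb (A : nat -> nat -> C) (c : nat -> C) n :
  (forall k, is_series (A k) (RtoC 0)) ->
  is_series (fun j => sumC (fun k => c k * A k j)%C n) (RtoC 0).
Proof.
  intros H. induction n.
  - simpl. pose proof (is_series_scal (c O) (A O) _ (H O)) as H1.
    replace (RtoC 0) with (scal (c O) (RtoC 0)) by (change (c O * RtoC 0 = RtoC 0)%C; ring).
    exact H1.
  - pose proof (is_series_plus _ _ _ _ IHn (is_series_scal (c (S n)) (A (S n)) _ (H (S n)))) as H1.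
    replace (RtoC 0) with (plus (RtoC 0) (scal (c (S n)) (RtoC 0)))
      by (change (RtoC 0 + c (S n) * RtoC 0 = RtoC 0)%C; ring).
    eapply is_series_ext; [|exact H1]. intros j. reflexivity.
Qed.

Lemma key_series g v lam a m n :
  (forall i j, lam i = lam j -> i = j) -> (forall k j, lam k <> g j) ->
  (forall k, H_is g v a (lam k) (RtoC 0)) ->
  is_series (fun j => a j * RtoC (v j) * Gp g lam m n (g j))%C (RtoC 0).
Proof.
  intros Hinj Hlg H.
  destruct (Gp_InL g lam m n Hinj) as [c Hc].
  pose proof (series_comb (fun k j => a j * RtoC (v j) / (lam k - g j))%C (fun k => - c k)%C n H) as H1.
  eapply is_series_ext; [|exact H1]. intros j. simpl.
  rewrite Hc by (intros k _ E; apply (Hlg k j); auto).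
  transitivity (sumC (fun k => c k / (g j - lam k)) n * (a j * RtoC (v j)))%C; [|ring]. rewrite <- sumC_mult_r. apply sumC_ext. intros k _.
  assert ((lam k - g j)%C <> RtoC 0) by (apply Cminus_neq0; auto).
  assert ((g j - lam k)%C <> RtoC 0) by (apply Cminus_neq0; intro E; apply (Hlg k j); auto).
  field. split; auto.
Qed.

Lemma sum_n_single (T : nat -> C) m n : (m <= n)%nat ->
  (forall j, (j <= n)%nat -> j <> m -> T j = RtoC 0) -> sum_n T n = T m.
Proof.
  intros Hm H. induction n.
  - assert (m = O) by lia. subst. apply sum_O.
  - rewrite sum_Sn. destruct (Nat.eq_dec m (S n)).
    + subst m. assert (sum_n T n = RtoC 0).
      { clear IHn Hm. induction n. rewrite sum_O. apply H; lia.
        rewrite sum_Sn, IHn by (intros; apply H; lia). rewrite H by lia.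
        change (RtoC 0 + RtoC 0 = RtoC 0)%C. ring. }
      rewrite H0. change (RtoC 0 + T (S n) = T (S n))%C. ring.
    + rewrite IHn by (try lia; intros; apply H; lia). rewrite (H (S n)) by lia.
      change (T m + RtoC 0 = T m)%C. ring.
Qed.

Lemma tail_series (T : nat -> C) m n : (m <= n)%nat ->
  (forall j, (j <= n)%nat -> j <> m -> T j = RtoC 0) ->
  is_series T (RtoC 0) -> is_series (fun k => T (S n + k)%nat) (- T m)%C.
Proof.
  intros Hm HT H. apply is_series_incr_n; [lia|]. change (Init.Nat.pred (S n)) with n.
  assert (E : @sum_n (NormedModule.AbelianMonoid C_AbsRing C_NormedModule) T n = T m) by (apply (sum_n_single T m n Hm HT)). rewrite E.
  assert (E2 : @plus (NormedModule.AbelianMonoid C_AbsRing C_NormedModule) (- T m)%C (T m) = RtoC 0) by (change (- T m + T m = RtoC 0)%C; ring). rewrite E2. exact H.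
Qed.

Lemma sum_n_Cmod_le (b : nat -> C) (e : nat -> R) N :
  (forall n, Cmod (b n) <= e n) -> Cmod (sum_n b N) <= sum_n e N.
Proof.
  intros H. induction N.
  - rewrite !sum_O. auto.
  - rewrite !sum_Sn. eapply Rle_trans; [apply Cmod_triangle|].
    apply Rplus_le_compat; auto.
Qed.

Lemma series_Cmod_le (b : nat -> C) (l : C) (e : nat -> R) :
  is_series b l -> (forall n, Cmod (b n) <= e n) -> ex_series e -> Cmod l <= Series e.
Proof.
  intros Hb He [s Hs].
  rewrite (is_series_unique e s Hs).
  assert (H1 : is_lim_seq (fun N => Cmod (sum_n b N)) (Cmod l)).
  { unfold is_lim_seq. simpl.
    apply filterlim_ext with (f := fun N => @norm C_AbsRing C_NormedModule (sum_n b N)).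
    { intros x. reflexivity. }
    change (Cmod l) with (@norm C_AbsRing C_NormedModule l). eapply filterlim_comp; [exact Hb| apply filterlim_norm]. }
  assert (H2 : is_lim_seq (sum_n e) s) by exact Hs.
  apply (is_lim_seq_le _ _ _ _ (fun N => sum_n_Cmod_le b e N He) H1 H2).
Qed.

Lemma Gp_zero_at g lam m n j : (m <= n)%nat -> (j <= n)%nat -> j <> m -> Gp g lam m n (g j) = RtoC 0.
Proof.
  intros Hmn Hj Hjm. destruct (Nat.ltb_spec j m).
  - apply (Gp_zero g lam m n (g j) j); [lia|]. unfold bidx. rewrite (proj2 (Nat.ltb_lt j m) H). auto.
  - apply (Gp_zero g lam m n (g j) (j - 1)); [lia|]. unfold bidx.
    rewrite (proj2 (Nat.ltb_ge (j - 1) m)) by lia. f_equal. lia.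
Qed.

Lemma geo_tail theta n : 0 <= theta < 1 ->
  is_series (fun k => theta ^ (S n + k)) (theta ^ (S n) * / (1 - theta)).
Proof.
  intros Ht. pose proof (is_series_geom theta ltac:(rewrite Rabs_pos_eq; lra)) as H.
  pose proof (is_series_scal (theta ^ (S n)) _ _ H) as H1.
  eapply is_series_ext; [|exact H1]. intros k. change (scal (theta ^ S n) (theta ^ k)) with (theta ^ S n * theta ^ k). rewrite pow_add. reflexivity.
Qed.

Lemma bound_n (g : nat -> C) v (lam a : nat -> C) m n C theta :
  (forall k, 0 < v k) -> (forall i j, g i = g j -> i = j) ->
  (forall i j, lam i = lam j -> i = j) -> (forall k j, lam k <> g j) ->
  (forall k, H_is g v a (lam k) (RtoC 0)) -> in_l2v v a -> 0 <= theta < 1 ->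
  (m <= n)%nat ->
  (forall j, (S n <= j)%nat ->
      v j * (Cmod (Gp g lam m n (g j)) / Cmod (Gp g lam m n (g m))) ^ 2 <= C * theta ^ j) ->
  Cmod (a m) * v m <= / 2 * Series (fun k => Cmod (a (S n + k)%nat) ^ 2 * v (S n + k)%nat)
                      + / 2 * C * (theta ^ (S n) * / (1 - theta)).
Proof.
  intros Hv Hg Hlinj Hlg HH Ha Ht Hmn Hest.
  set (u := fun j => Cmod (a j) ^ 2 * v j).
  set (T := fun j => (a j * RtoC (v j) * Gp g lam m n (g j))%C).
  pose proof (key_series g v lam a m n Hlinj Hlg HH) as HT.
  assert (HT0 : forall j, (j <= n)%nat -> j <> m -> T j = RtoC 0).
  { intros j Hj Hjm. unfold T. rewrite Gp_zero_at by auto. ring. }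
  pose proof (tail_series T m n Hmn HT0 HT) as Htail.
  set (G := Cmod (Gp g lam m n (g m))).
  assert (HG : 0 < G) by (apply Cmod_gt_0, Gp_nonzero; auto).
  assert (Hex : ex_series (fun k => u (S n + k)%nat)) by (apply (ex_series_incr_n u (S n)); exact Ha).
  set (su := Series (fun k => u (S n + k)%nat)).
  assert (Hsu : is_series (fun k => u (S n + k)%nat) su) by (apply Series_correct; auto).
  set (e := fun k => G * (/ 2 * u (S n + k)%nat + / 2 * C * theta ^ (S n + k))).
  assert (He : is_series e (G * (/ 2 * su + / 2 * C * (theta ^ (S n) * / (1 - theta))))).
  { pose proof (is_series_scal (/ 2) _ _ Hsu) as H1.
    pose proof (is_series_scal (/ 2 * C) _ _ (geo_tail theta n Ht)) as H2.
    pose proof (is_series_plus _ _ _ _ H1 H2) as H3.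
    pose proof (is_series_scal G _ _ H3) as H4. exact H4. }
  assert (Hbd : forall k, Cmod (T (S n + k)%nat) <= e k).
  { intros k. set (j := (S n + k)%nat).
    unfold T, e. fold j. rewrite !Cmod_mult, Cmod_R, Rabs_pos_eq by (left; apply Hv).
    set (R := Cmod (Gp g lam m n (g j)) / G).
    assert (HR : Cmod (Gp g lam m n (g j)) = G * R) by (unfold R; field; lra).
    rewrite HR.
    specialize (Hest j ltac:(unfold j; lia)). fold G R in Hest.
    assert (Hav : Cmod (a j) * v j * R <= / 2 * (u j + v j * R ^ 2)).
    { unfold u. pose proof (Hv j). assert (0 <= v j * (Cmod (a j) - R) ^ 2) by (apply Rmult_le_pos; [lra| apply pow2_ge_0]).
      nra. }
    assert (Cmod (a j) * v j * (G * R) = G * (Cmod (a j) * v j * R)) by ring.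
    rewrite H. apply Rmult_le_compat_l; [lra|]. lra. }
  pose proof (series_Cmod_le _ _ e Htail Hbd (ex_intro _ _ He)) as Hfin.
  rewrite (is_series_unique e _ He) in Hfin.
  replace (Cmod (- T m)) with (G * (Cmod (a m) * v m)) in Hfin.
  2:{ unfold T, G. replace (- (a m * RtoC (v m) * Gp g lam m n (g m)))%C
        with ((- (1)) * (a m * RtoC (v m) * Gp g lam m n (g m)))%C by ring.
      rewrite !Cmod_mult, Cmod_m1, Cmod_R, Rabs_pos_eq by (left; apply Hv). ring. }
  apply Rmult_le_reg_l with G; auto.
Qed.

Theorem lemma8 (g : nat -> C) (v : nat -> R) (lam : nat -> C) :
  lacunary g ->
  admissible_weight g v ->
  admissible_Lambda g lam ->
  is_lim_seq (fun k => v k / Vs v k) 0 ->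
  exact_v_perturbation g v lam ->
  uniqueness_seq g v lam.
Proof.
  intros [Hginj [q [Hq Hlac]]] [Hv _] [Hlinj [Hl0 [Hlg Hlm]]] Hlim [M [N0 HD]] a Ha HH m.
  destruct (main_estimate g v lam q M N0 m Hq Hlac Hginj Hv Hlim HD Hlg Hl0 Hlm)
    as [C [theta [N1 [HC [Ht Hest]]]]].
  set (u := fun j => Cmod (a j) ^ 2 * v j).
  assert (Hu : ex_series u) by exact Ha.
  set (B := fun n => / 2 * (Series u - sum_f_R0 u n) + / 2 * C * (theta ^ (S n) * / (1 - theta))).
  assert (Hb : forall n, (Nat.max m N1 <= n)%nat -> Cmod (a m) * v m <= B n).
  { intros n Hn. unfold B.
    rewrite (Series_incr_n u (S n)) by (auto; lia). simpl Init.Nat.pred.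
    replace (sum_f_R0 u n + Series (fun k => u (S n + k)%nat) - sum_f_R0 u n)
      with (Series (fun k => u (S n + k)%nat)) by ring.
    apply (bound_n g v lam a m n C theta Hv Hginj Hlinj Hlg HH Ha Ht); [lia|].
    intros j Hj. apply Hest; lia. }
  assert (HB : is_lim_seq B 0).
  { unfold B. replace 0 with (/ 2 * (Series u - Series u) + / 2 * C * (0 * / (1 - theta))) by ring.
    apply is_lim_seq_plus'.
    - apply (is_lim_seq_scal_l _ (/ 2) (Series u - Series u)).
      apply is_lim_seq_minus'; [apply is_lim_seq_const|].
      apply is_lim_seq_ext with (fun n => sum_n u n); [intros; apply sum_n_Reals|].
      apply Series_correct; auto.
    - apply (is_lim_seq_scal_l _ (/ 2 * C) (0 * / (1 - theta))).
      apply is_lim_seq_mult'; [|apply is_lim_seq_const].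
      apply (is_lim_seq_incr_1 (fun n => theta ^ n)). apply is_lim_seq_geom.
      rewrite Rabs_pos_eq; lra. }
  assert (Hle : Cmod (a m) * v m <= 0).
  { assert (Rbar_le (Cmod (a m) * v m) 0).
    { apply (is_lim_seq_le_loc (fun _ => Cmod (a m) * v m) B); auto.
      - exists (Nat.max m N1). auto.
      - apply is_lim_seq_const. }
    exact H. }
  pose proof (Cmod_ge_0 (a m)). pose proof (Hv m).
  assert (Cmod (a m) = 0) by nra.
  apply Cmod_eq_0; auto.
Qed.
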